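(* Consider a ring gossip network with a source and $n$ end-nodes as described in the context, and let $\rho=\lambda_e/\lambda$. Let $F^{(n)}=\lim_{t\to\infty}\mathbb{E}[F_1(t)]$ denote the average binary freshness of a single end-node. Then $F^{(n)}\to0$ as $n\to\infty$, decreasing as $\left(\frac{1}{\rho}+\frac{1}{\rho^2}\right)n^{-1}$, i.e., $\lim_{n\to\infty}nF^{(n)}=\frac{1}{\rho}+\frac{1}{\rho^2}$.
   Context: Model: The information at the source is updated (a new version is generated) according to a Poisson process of rate $\lambda_e>0$. The source sends its current version to each end-node $j\in\{1,\dots,n\}$ according to a Poisson process of rate $\lambda/n$, where $\lambda>0$. The end-nodes form a bidirectional ring: each end-node $j$ sends its stored version to each of its two ring neighbors $j-1$ and $j+1$ (indices mod $n$) according to a Poisson process of rate $\lambda/2$ each. All processes are independent. A node receiving a version keeps the fresher of its stored and received versions. The binary freshness $F_j(t)$ of node $j$ is $1$ if node $j$ stores the current source version at time $t$ and $0$ otherwise; thus it becomes $0$ whenever the source generates a new version, becomes $1$ when the source updates node $j$, and becomes $\max(F_i,F_j)$ when node $i$ updates node $j$. *)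

(* Defs.v *)
From HB Require Import structures.
From mathcomp Require Import all_boot all_order all_algebra.
From mathcomp Require Import all_classical all_reals all_analysis.
Set Implicit Arguments. Unset Strict Implicit. Unset Printing Implicit Defensive.
Import Order.TTheory GRing.Theory Num.Theory.
Import numFieldNormedType.Exports.
Local Open Scope classical_set_scope.
Local Open Scope ring_scope.

(* State of the binary-freshness process of the n end-nodes:
   x j = true  iff node j stores the current source version. *)
Definition state (n : nat) := {ffun 'I_n -> bool}.

(* source generates a new version: everybody becomes stale *)
Definition reset_map n (x : state n) : state n := [ffun _ => false].
Definition src_map n (j : 'I_n) (x : state n) : state n :=
  [ffun k => if k == j then true else x k].
Definition gossip_map n (i j : 'I_n) (x : state n) : state n :=
  [ffun k => if k == j then x i || x j else x k].

Section Gen.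
Variable R : realType.

(* Contribution to the Kolmogorov forward equation of an event occurring at
   rate r and mapping the state x to f x. *)
Definition flow n (r : R) (f : state n -> state n) (p : state n -> R)
  (y : state n) : R :=
  r * \sum_(x : state n) p x * ((f x == y)%:R - (x == y)%:R).

(* Right-hand side (p Q)(y) of the forward equation dp/dt = p Q of the
   continuous-time Markov chain: source refresh at rate le, source -> node j
   at rate l/n for each j, node i -> each ring neighbour (i+1, i-1 mod n) at
   rate l/2 each. *)
Definition fwd_gen n (le l : R) (p : state n -> R) (y : state n) : R :=
  flow le (@reset_map n) p y
  + \sum_(j < n) flow (l / n%:R) (src_map j) p y
  + \sum_(i < n) (flow (l / 2) (gossip_map i (ordS i)) p y
                  + flow (l / 2) (gossip_map i (ord_pred i)) p y).

Definition is_law_of_process n (le l : R) (p : R -> state n -> R) : Prop :=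
  (forall x, 0 <= p 0 x) /\ (\sum_(x : state n) p 0 x = 1)
  /\ (forall x, (fun t => p t x) @ at_right 0 --> p 0 x)
  /\ (forall t : R, 0 < t -> forall y : state n,
        is_derive t (1 : R) (fun s : R => p s y) (fwd_gen le l (p t) y)).

(* E[F_1(t)], node 1 being the ordinal 0 (0-based indexing). *)
Definition mean_fresh1 n (p : R -> state n.+1 -> R) (t : R) : R :=
  \sum_(x : state n.+1) p t x * (x ord0)%:R.

End Gen.

(* Main.v *)
Require Import Defs.
From HB Require Import structures.
From mathcomp Require Import all_boot all_order all_algebra.
From mathcomp Require Import all_classical all_reals all_analysis.
From mathcomp Require Import ring lra zify.
Import Order.TTheory GRing.Theory Num.Theory.
Import numFieldNormedType.Exports.
Local Open Scope classical_set_scope.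
Local Open Scope ring_scope.

Lemma is_derive_expRc (R : realType) (c t : R) :
  is_derive t 1 (fun s => expR (c * s)) (c * expR (c * t)).
Proof.
have h1 : is_derive t (1:R) ( *%R c) c.
  have := @is_deriveZ R R R id c t 1 1 (is_derive_id _ _).
  by rewrite /GRing.scale /= mulr1.
have := @is_derive_expR R (c * t).
move=> h2.
have d1 : derivable ( *%R c) t 1 by case: h1.
have d2 : derivable expR (c * t) 1 by case: h2.
apply: DeriveDef.
  apply/derivable1_diffP.
  change (differentiable (expR \o ( *%R c)) t).
  apply: differentiable_comp; exact/derivable1_diffP.
rewrite -derive1E.
change (((expR \o ( *%R c))^`())%classic t = c * expR (c * t)).
rewrite derive1_comp //.
rewrite !derive1E !derive_val /=. by rewrite mulrC.
Qed.

Lemma ode_upper (R : realType) (c B T : R) (y g : R -> R) : 0 < c -> 0 < T ->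
  (forall t : R, 0 < t -> is_derive t (1:R) y (- c * y t + g t)) ->
  (forall s : R, T <= s -> g s <= B) ->
  forall t : R, T <= t -> expR (c * t) * (y t - B / c) <= expR (c * T) * (y T - B / c).
Proof.
move=> c0 T0 dy gB t Tt.
set psi := fun s => expR (c * s) * (y s - B / c).
have dpsi : forall s : R, 0 < s -> is_derive s (1:R) psi (expR (c * s) * (g s - B)).
  move=> s s0.
  have dy' : is_derive s (1:R) (fun s => y s - B / c) (- c * y s + g s).
    have := @is_deriveB R R R y (cst (B / c)) s 1 _ 0 (dy s s0) (is_derive_cst _ _ _).
    by rewrite subr0.
  have := is_deriveM (@is_derive_expRc R c s) dy'.
  move=> h.
  have -> : psi = (fun s => expR (c * s)) * (fun s => y s - B / c) by apply: funext.
  apply: is_derive_eq h _.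
  rewrite /GRing.scale /=; field; rewrite lt0r_neq0 //.
have := @MVT_segment R psi (fun s => expR (c * s) * (g s - B)) T t Tt.
case.
- move=> x; rewrite in_itv /= => /andP [Tx _]; apply: dpsi.
  exact: lt_trans T0 Tx.
- apply: derivable_within_continuous => x; rewrite in_itv /= => /andP [Tx _].
  have [] := dpsi x (lt_le_trans T0 Tx) => //.
move=> xi; rewrite in_itv /= => /andP [Txi _] E.
rewrite -subr_le0 E; apply: mulr_le0_ge0; last by rewrite subr_ge0.
apply: mulr_ge0_le0; first exact: expR_ge0.
by rewrite subr_le0; apply: gB.
Qed.

Lemma ode_cvg (R : realType) (c gs : R) (y g : R -> R) : 0 < c ->
  (forall t : R, 0 < t -> is_derive t (1:R) y (- c * y t + g t)) ->
  g t @[t --> +oo] --> gs -> y t @[t --> +oo] --> gs / c.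
Proof.
move=> c0 dy gcv.
apply/cvgrPdist_le => e e0.
have ce0 : 0 < c * e / 2 by rewrite divr_gt0 // mulr_gt0.
have := (cvgrPdist_le _ _).1 gcv _ ce0.
case=> M [Mreal HM].
set T := Num.max M 0 + 1.
have T0 : 0 < T by rewrite /T; apply: (@lt_le_trans _ _ 1) => //; rewrite lerDr le_max lexx orbT.
have MT : M < T by rewrite /T; apply: (@le_lt_trans _ _ (Num.max M 0)); [rewrite le_max lexx | rewrite ltrDl].
have gT : forall s : R, T <= s -> `|gs - g s| <= c * e / 2.
  by move=> s Ts; apply: HM; exact: lt_le_trans MT Ts.
have U := @ode_upper R c (gs + c * e / 2) T y g c0 T0 dy.
have {U} U : forall t : R, T <= t -> expR (c * t) * (y t - (gs + c * e / 2) / c) <= expR (c * T) * (y T - (gs + c * e / 2) / c).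
  apply: U => s Ts; have := gT s Ts; rewrite ler_norml => /andP [h1 h2]; lra.
have dny : forall t : R, 0 < t -> is_derive t (1:R) (- y) (- c * (- y) t + (- g) t).
  move=> t t0; have := is_deriveN (dy t t0); move=> h; apply: is_derive_eq h _.
  have -> : (- y) t = - y t by []. have -> : (- g) t = - g t by []. ring.
have L := @ode_upper R c (- gs + c * e / 2) T (- y) (- g) c0 T0 dny.
have {L} L : forall t : R, T <= t -> expR (c * t) * (- y t - (- gs + c * e / 2) / c) <= expR (c * T) * (- y T - (- gs + c * e / 2) / c).
  apply: L => s Ts; have := gT s Ts; rewrite ler_norml => /andP [h1 h2]; have -> : (- g) s = - g s by []; lra.
set Q := expR (c * T) * (`|y T| + `|gs / c| + e).
have Q0 : 0 <= Q by rewrite mulr_ge0 // ?expR_ge0 // addr_ge0 // ?addr_ge0 // ltW.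
exists (Num.max T (2 * Q / (c * e))); split; first by rewrite num_real.
move=> t; rewrite gt_max => /andP [Tt Qt].
have Tt' : T <= t by exact: ltW.
have U1 := U t Tt'.
have L1 := L t Tt'.
have eT : 0 < expR (c * T) := expR_gt0 _.
have et : 1 + c * t <= expR (c * t) := expR_ge1Dx _.
have E1 : (gs + c * e / 2) / c = gs / c + e / 2 by field; rewrite lt0r_neq0.
have E2 : (- gs + c * e / 2) / c = - (gs / c) + e / 2 by field; rewrite lt0r_neq0.
have n1 := ler_norm (y T). have n2 := ler_norm (- y T). have n3 := ler_norm (gs / c).
have n4 := ler_norm (- (gs / c)). rewrite normrN in n2; rewrite normrN in n4.
have UQ : expR (c * T) * (y T - (gs + c * e / 2) / c) <= Q.
  by rewrite /Q ler_pM2l // E1; lra.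
have LQ : expR (c * T) * (- y T - (- gs + c * e / 2) / c) <= Q.
  by rewrite /Q ler_pM2l // E2; lra.
have ctQ : 2 * Q <= c * e * t.
  move: Qt; rewrite ltr_pdivrMr ?mulr_gt0 // => h; rewrite [c * e * t]mulrC; exact: ltW.
rewrite E1 in U1 UQ; rewrite E2 in L1 LQ.
set X := expR (c * t) in U1 L1 et.
have X0 : 0 < X by rewrite /X expR_gt0.
have Xe : Q < X * e / 2.
  have : (1 + c * t) * e <= X * e by rewrite ler_pM2r.
  lra.
have A1 : X * (y t - gs / c - e) < 0 by lra.
have A2 : X * (gs / c - y t - e) < 0 by lra.
rewrite pmulr_rlt0 // in A1. rewrite pmulr_rlt0 // in A2.
rewrite ler_norml; apply/andP; split; lra.
Qed.

Lemma const_mass (R : realType) (m : R -> R) (m0 : R) :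
  (forall t : R, 0 < t -> is_derive t (1:R) m 0) ->
  m t @[t --> 0^'+] --> m0 -> forall t : R, 0 < t -> m t = m0.
Proof.
move=> dm cm.
have key : forall a b : R, 0 < a -> a <= b -> m b = m a.
  move=> a b a0 ab.
  have [] := @MVT_segment R m (fun _ => 0) a b ab.
  - move=> x; rewrite in_itv /= => /andP [ax _]; apply: dm; exact: lt_trans a0 ax.
  - apply: derivable_within_continuous => x; rewrite in_itv /= => /andP [ax _].
    by have [] := dm x (lt_le_trans a0 ax).
  by move=> xi _; rewrite mul0r => /eqP; rewrite subr_eq0 => /eqP.
move=> t t0.
have ct : m s @[s --> 0^'+] --> m t.
  apply/cvgrPdist_le => e e0; near=> s.
  rewrite (key s t) ?subrr ?normr0; [exact: ltW | | apply: ltW]. 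
  - by near: s; exact: nbhs_right_gt.
  - by near: s; exact: nbhs_right_lt.
by apply: (cvg_unique _ ct cm).
Unshelve. all: by end_near.
Qed.

Set Implicit Arguments. Unset Strict Implicit. Unset Printing Implicit Defensive.
Section Gen2.
Variable R : realType.

Lemma sum_eq_pt (T : finType) (a : T) (h : T -> R) :
  \sum_y (a == y)%:R * h y = h a.
Proof.
rewrite (bigD1 a) //= eqxx mul1r big1 ?addr0 // => y /negbTE.
by rewrite eq_sym => ->; rewrite mul0r.
Qed.

Lemma flow_dual N (r : R) (f : state N -> state N) (q h : state N -> R) :
  \sum_y flow r f q y * h y = r * \sum_x q x * (h (f x) - h x).
Proof.
rewrite /flow.
under eq_bigr do rewrite -mulrA big_distrl /=.
rewrite -big_distrr /=; congr (_ * _).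
rewrite exchange_big /=; apply: eq_bigr => x _.
under eq_bigr do rewrite -mulrA.
rewrite -big_distrr /=; congr (_ * _).
under eq_bigr do rewrite mulrBl.
by rewrite sumrB !sum_eq_pt.
Qed.


Definition genb N (le l : R) (h : state N -> R) (x : state N) : R :=
  le * (h (reset_map x) - h x)
  + \sum_(j < N) (l / N%:R) * (h (src_map j x) - h x)
  + \sum_(i < N) ((l / 2) * (h (gossip_map i (ordS i) x) - h x)
                 + (l / 2) * (h (gossip_map i (ord_pred i) x) - h x)).

Lemma fwd_dual N (le l : R) (q h : state N -> R) :
  \sum_y fwd_gen le l q y * h y = \sum_x q x * genb le l h x.
Proof.
have -> : \sum_x q x * genb le l h x =
  \sum_x q x * (le * (h (reset_map x) - h x))
  + \sum_x \sum_(j < N) q x * ((l / N%:R) * (h (src_map j x) - h x))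
  + \sum_x \sum_(i < N) q x * ((l / 2) * (h (gossip_map i (ordS i) x) - h x)
                 + (l / 2) * (h (gossip_map i (ord_pred i) x) - h x)).
  rewrite -!big_split /=; apply: eq_bigr => x _; rewrite /genb -!big_distrr /=; ring.
rewrite /fwd_gen.
under eq_bigr do rewrite !mulrDl !big_distrl /=.
rewrite !big_split /= flow_dual.
congr (_ + _ + _).
- by rewrite big_distrr /=; apply: eq_bigr => x _; rewrite mulrCA.
- rewrite exchange_big [RHS]exchange_big /=; apply: eq_bigr => j _.
  by rewrite flow_dual big_distrr /=; apply: eq_bigr => x _; rewrite mulrCA.
- rewrite exchange_big [RHS]exchange_big /=; apply: eq_bigr => i _.
  under eq_bigr do rewrite mulrDl.
  rewrite big_split /= !flow_dual !big_distrr -big_split /=.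
  by apply: eq_bigr => x _; ring.
Qed.


Definition exS N (S : {set 'I_N}) (x : state N) : bool := [exists k in S, x k].
Definition fS N (S : {set 'I_N}) (x : state N) : R := (exS S x)%:R.

Lemma exS_reset N (S : {set 'I_N}) x : exS S (reset_map x) = false.
Proof. by apply/existsP => -[k]; rewrite ffunE andbF. Qed.

Lemma exS_src N (S : {set 'I_N}) j x : exS S (src_map j x) = (j \in S) || exS S x.
Proof.
apply/idP/idP.
- case/existsP => k /andP [kS]; rewrite ffunE; case: eqP => [ekj _ | _ xk].
    by rewrite -ekj kS.
  by apply/orP; right; apply/existsP; exists k; rewrite kS xk.
- case/orP => [jS | /existsP [k /andP [kS xk]]]; apply/existsP.
    by exists j; rewrite ffunE eqxx jS.
  by exists k; rewrite kS ffunE /=; case: eqP.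
Qed.

Lemma exS_gossip N (S : {set 'I_N}) i j x :
  exS S (gossip_map i j x) = exS S x || ((j \in S) && x i).
Proof.
apply/idP/idP.
- case/existsP => k /andP [kS]; rewrite ffunE; case: eqP => [ekj | _ xk].
    rewrite ekj in kS; case/orP => [xi | xj].
      by rewrite kS xi orbT.
    by apply/orP; left; apply/existsP; exists j; rewrite kS xj.
  by apply/orP; left; apply/existsP; exists k; rewrite kS xk.
- case/orP => [/existsP [k /andP [kS xk]] | /andP [jS xi]]; apply/existsP.
    exists k; rewrite kS ffunE /=; case: eqP => [ekj | _ //].
    by rewrite -ekj xk orbT.
  by exists j; rewrite jS ffunE eqxx xi.
Qed.

Lemma exS_U1 N (S : {set 'I_N}) i x : exS (i |: S) x = x i || exS S x.
Proof.
apply/idP/idP.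
- case/existsP => k /andP []; rewrite in_setU1 => /orP [/eqP eki | kS] xk.
    by rewrite -eki xk.
  by apply/orP; right; apply/existsP; exists k; rewrite kS xk.
- case/orP => [xi | /existsP [k /andP [kS xk]]]; apply/existsP.
    by exists i; rewrite setU11 xi.
  by exists k; rewrite in_setU1 kS orbT xk.
Qed.

Lemma fS_reset N (S : {set 'I_N}) x : fS S (reset_map x) - fS S x = - fS S x.
Proof. by rewrite /fS exS_reset add0r. Qed.

Lemma fS_src N (S : {set 'I_N}) j x :
  fS S (src_map j x) - fS S x = (j \in S)%:R * (1 - fS S x).
Proof.
rewrite /fS exS_src; case: (j \in S); case: (exS S x) => /=; ring.
Qed.

Lemma fS_gossip N (S : {set 'I_N}) i j x :
  fS S (gossip_map i j x) - fS S x =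
  ((j \in S) && (i \notin S))%:R * (fS (i |: S) x - fS S x).
Proof.
rewrite /fS exS_gossip exS_U1.
case iS: (i \in S) => /=.
  have h : x i -> exS S x by move=> xi; apply/existsP; exists i; rewrite iS xi.
  rewrite andbF mul0r; case: (j \in S) => /=; last by rewrite orbF subrr.
  case xi: (x i); last by rewrite orbF subrr.
  by rewrite orbT (h xi) subrr.
by case: (j \in S); case: (x i); case: (exS S x) => /=; ring.
Qed.

End Gen2.
Arguments fS {R N}.

Section Arcs.
Variable N : nat.
Hypothesis hN : (0 < N)%N.
Local Open Scope nat_scope.

Definition dd s (j : 'I_N) : nat := (j + s) %% N.
Definition arc s k : {set 'I_N} := [set j | (dd s j < k)%N].

Lemma dd_lt s j : (dd s j < N)%N.
Proof. exact: ltn_pmod. Qed.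

Lemma dd_ordS s i : dd s (ordS i) = (dd s i).+1 %% N.
Proof. by rewrite /dd /= modnDml -[((_ + s) %% N).+1]addn1 modnDml addn1 addSn. Qed.

Lemma dd_pred s i : dd s (ord_pred i) = (dd s i + N.-1) %% N.
Proof.
rewrite /dd /= modnDml modnDml; congr (_ %% N).
have := ltn_ord i; lia.
Qed.

Lemma dd_S s j : dd s.+1 j = (dd s j).+1 %% N.
Proof. by rewrite /dd addnS -[((_ + s) %% N).+1]addn1 modnDml addn1. Qed.

Lemma dd_inj s i j : dd s i = dd s j -> i = j.
Proof.
move/eqP; rewrite /dd eqn_modDr !modn_small // => /eqP h.
exact: val_inj.
Qed.

Definition dmap s (j : 'I_N) : 'I_N := Ordinal (dd_lt s j).

Lemma dmap_inj s : injective (dmap s).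
Proof. by move=> i j /(congr1 val) /= /dd_inj. Qed.

Lemma dd_surj s v : (v < N)%N -> exists i, dd s i = v.
Proof.
move=> vN.
have := injF_onto (@dmap_inj s) (Ordinal vN).
case/codomP => i /(congr1 val) /= ->; by exists i.
Qed.


Lemma in_arc s k j : (j \in arc s k) = (dd s j < k).
Proof. by rewrite inE. Qed.

Lemma modS_cases D : D < N -> (D.+1 %% N = D.+1 /\ D.+1 < N) \/ (D.+1 %% N = 0 /\ D.+1 = N).
Proof.
move=> DN; case: (ltngtP D.+1 N) => [lt|gt|eq].
- by left; rewrite modn_small.
- lia.
- by right; rewrite eq modnn.
Qed.

Lemma modP_cases D : D < N -> (D = 0 /\ (D + N.-1) %% N = N.-1) \/ (0 < D /\ (D + N.-1) %% N = D.-1).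
Proof.
move=> DN; case: D DN => [|D] DN.
- by left; rewrite add0n modn_small //; lia.
- right; split => //.
  have -> : D.+1 + N.-1 = D + N by lia.
  by rewrite modnDr modn_small //; lia.
Qed.

Lemma cond_succ s k i : 0 < k < N ->
  (ordS i \in arc s k) && (i \notin arc s k) = (dd s i == N.-1).
Proof.
rewrite !in_arc dd_ordS => kk.
have := dd_lt s i; move: (dd s i) => D DN.
case: (modS_cases DN) => [[-> ?]|[-> ?]]; lia.
Qed.

Lemma cond_pred s k i : 0 < k < N ->
  (ord_pred i \in arc s k) && (i \notin arc s k) = (dd s i == k).
Proof.
rewrite !in_arc dd_pred => kk.
have := dd_lt s i; move: (dd s i) => D DN.
case: (modP_cases DN) => [[? ->]|[? ->]]; lia.
Qed.

Lemma arcU_succ s k i0 : k < N -> dd s i0 = N.-1 -> i0 |: arc s k = arc s.+1 k.+1.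
Proof.
move=> kN hi0; apply/setP => j; rewrite in_setU1 !in_arc dd_S.
have := dd_lt s j.
have -> : (j == i0) = (dd s j == N.-1).
  apply/eqP/eqP => [-> // | h]; apply: (@dd_inj s); by rewrite h hi0.
move: (dd s j) => D DN.
case: (modS_cases DN) => [[-> ?]|[-> ?]]; lia.
Qed.

Lemma arcU_pred s k i1 : dd s i1 = k -> i1 |: arc s k = arc s k.+1.
Proof.
move=> hi1; apply/setP => j; rewrite in_setU1 !in_arc.
have -> : (j == i1) = (dd s j == k).
  apply/eqP/eqP => [-> // | h]; apply: (@dd_inj s); by rewrite h hi1.
lia.
Qed.

Lemma arc_full s : arc s N = [set: 'I_N]%SET.
Proof. by apply/setP => j; rewrite !inE dd_lt. Qed.

End Arcs.
Arguments arc {N}.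

Section ArcGen.
Variable R : realType.
Variable N : nat.
Hypothesis hN : (0 < N)%N.

Lemma sum_lt_k k : (k <= N)%N -> \sum_(v < N) (((v < k)%N)%:R : R) = k%:R.
Proof.
move=> kN.
rewrite -(big_mkord xpredT (fun v => (((v < k)%N)%:R : R))).
rewrite (big_cat_nat (n:=k)) //=.
rewrite (@eq_big_nat _ _ _ 0 k _ (fun _ => (1 : R))); last by move=> i /andP [_ ->].
rewrite (@eq_big_nat _ _ _ k N _ (fun _ => (0 : R))); last first.
  by move=> i /andP [ki _]; rewrite ltnNge ki.
by rewrite !sumr_const_nat mul0rn addr0 subn0 -[in RHS](mul1r (k%:R)) mulr_natr.
Qed.

Lemma sum_arc s k : (k <= N)%N -> \sum_(j < N) (((j \in arc s k))%:R : R) = k%:R.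
Proof.
move=> kN.
under eq_bigr do rewrite in_arc.
rewrite -(sum_lt_k kN) [RHS](reindex_inj (@dmap_inj N hN s)) /=.
by [].
Qed.


Lemma gsum_succ s k (x : state N) : (0 < k < N)%N ->
  \sum_(i < N) (((ordS i \in arc s k) && (i \notin arc s k))%:R : R)
     * (fS (i |: arc s k) x - fS (arc s k) x)
  = fS (arc s.+1 k.+1) x - fS (arc s k) x.
Proof.
move=> kk.
have hN1 : (N.-1 < N)%N by rewrite ltn_predL.
have [i0 hi0] := @dd_surj N hN s N.-1 hN1.
rewrite (bigD1 i0) //= big1 ?addr0.
  rewrite cond_succ // hi0 eqxx mul1r arcU_succ //.
  by case/andP: kk.
move=> i ni; rewrite cond_succ //.
case: eqP => [h|_]; last by rewrite mul0r.
by case/eqP: ni; apply: (@dd_inj N s); rewrite h hi0.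
Qed.

Lemma gsum_pred s k (x : state N) : (0 < k < N)%N ->
  \sum_(i < N) (((ord_pred i \in arc s k) && (i \notin arc s k))%:R : R)
     * (fS (i |: arc s k) x - fS (arc s k) x)
  = fS (arc s k.+1) x - fS (arc s k) x.
Proof.
move=> kk.
have kN : (k < N)%N by case/andP: kk.
have [i1 hi1] := @dd_surj N hN s k kN.
rewrite (bigD1 i1) //= big1 ?addr0.
  by rewrite cond_pred // hi1 eqxx mul1r arcU_pred.
move=> i ni; rewrite cond_pred //.
case: eqP => [h|_]; last by rewrite mul0r.
by case/eqP: ni; apply: (@dd_inj N s); rewrite h hi1.
Qed.

Lemma genb_arc (le l : R) s k (x : state N) : (0 < k < N)%N ->
  genb le l (fS (arc s k)) x =
    - le * fS (arc s k) x + l / N%:R * k%:R * (1 - fS (arc s k) x)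
    + l / 2 * (fS (arc s.+1 k.+1) x - fS (arc s k) x)
    + l / 2 * (fS (arc s k.+1) x - fS (arc s k) x).
Proof.
move=> kk.
have kN : (k <= N)%N by case/andP: kk => _ /ltnW.
rewrite /genb fS_reset.
under eq_bigr do rewrite fS_src.
rewrite -big_distrr -big_distrl /= sum_arc //.
under [X in _ + X]eq_bigr do rewrite !fS_gossip.
rewrite big_split /= -!big_distrr /= gsum_succ // gsum_pred //.
ring.
Qed.

Lemma genb_full (le l : R) s (x : state N) :
  genb le l (fS (arc s N)) x = - le * fS (arc s N) x + l * (1 - fS (arc s N) x).
Proof.
rewrite /genb fS_reset.
under eq_bigr do rewrite fS_src.
rewrite -big_distrr -big_distrl /= sum_arc //.
under [X in _ + X]eq_bigr do rewrite !fS_gossip !in_arc !(dd_lt hN) andbF mul0r mulr0 addr0.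
rewrite big1 // addr0 mulrA mulfVK; last by rewrite pnatr_eq0 -lt0n.
ring.
Qed.

End ArcGen.

Fixpoint cs (R : realType) (le l : R) (N j : nat) : R :=
  if j is j'.+1 then
    (l / N%:R * (N - j'.+1)%:R + l * cs le l N j') / (le + l / N%:R * (N - j'.+1)%:R + l)
  else l / (le + l).

Section Proc.
Variable R : realType.
Variables le l : R.
Variable N : nat.
Hypothesis hN : (0 < N)%N.
Variable p : R -> state N -> R.
Hypothesis hp : is_law_of_process le l p.

Lemma is_derive_fsum (T : finType) (f : T -> R -> R) (df : T -> R) (t : R) :
  (forall x, is_derive t (1:R) (f x) (df x)) ->
  is_derive t (1:R) (fun s => \sum_x f x s) (\sum_x df x).
Proof.
move=> hf.
rewrite unlock /=.
elim: (index_enum T) => [|a r IH] /=.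
  exact: is_derive_cst.
have := is_deriveD (hf a) IH.
by [].
Qed.

Lemma dvh (h : state N -> R) (t : R) : 0 < t ->
  is_derive t (1:R) (fun s => \sum_x h x * p s x) (\sum_x p t x * genb le l h x).
Proof.
move=> t0; case: hp => _ [_ [_ hd]].
rewrite -fwd_dual.
have -> : \sum_y fwd_gen le l (p t) y * h y = \sum_y h y * fwd_gen le l (p t) y.
  by apply: eq_bigr => y _; rewrite mulrC.
apply: is_derive_fsum => x.
exact: (is_deriveZ (h x) (hd t t0 x)).
Qed.

Lemma mass_one (t : R) : 0 < t -> \sum_x p t x = 1.
Proof.
move=> t0.
have hc := hp; case: hc => _ [h1 [hcont _]].
rewrite -h1.
apply: (@const_mass R (fun s => \sum_x p s x)) => //.
- move=> u u0.
  have h := dvh (fun _ => 1) u0.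
  have e0 : \sum_x p u x * genb le l (fun _ => (1:R)) x = 0.
    rewrite big1 // => x _; rewrite /genb !subrr !mulr0 add0r !big1 ?addr0 ?mulr0 //.
  rewrite e0 in h.
  have -> : (fun s => \sum_x p s x) = (fun s => \sum_x (fun _ : state N => (1:R)) x * p s x).
    by apply: funext => s; under [RHS]eq_bigr do rewrite mul1r.
  exact: h.
- apply: cvg_big => //.
  + exact: add_continuous.
Qed.


Definition va s k (t : R) := \sum_x fS (arc s k) x * p t x.

Lemma lin4 (q f g h : state N -> R) (a b c d : R) :
  \sum_x q x * (a * f x + b + c * g x + d * h x) =
  a * \sum_x f x * q x + b * \sum_x q x + c * \sum_x g x * q x + d * \sum_x h x * q x.
Proof.
rewrite !big_distrr -!big_split /=; apply: eq_bigr => x _; ring.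
Qed.

Lemma rearr4 (a b c d e f g h : R) : - a * f + b * c * (1 - f) + d * (g - f) + e * (h - f)
   = (- a - b * c - d - e) * f + b * c + d * g + e * h.
Proof. ring. Qed.

Lemma rearr2 (a b f : R) : - a * f + b * (1 - f) = (- a - b) * f + b + 0 * f + 0 * f.
Proof. ring. Qed.

Lemma dva s k (t : R) : 0 < t -> (0 < k < N)%N ->
  is_derive t (1:R) (va s k)
    (- (le + l / N%:R * k%:R + l) * va s k t
     + (l / N%:R * k%:R + l / 2 * va s.+1 k.+1 t + l / 2 * va s k.+1 t)).
Proof.
move=> t0 kk.
have := dvh (fS (arc s k)) t0.
under eq_bigr do rewrite genb_arc // rearr4.
rewrite lin4 mass_one // => h.
have -> : - (le + l / N%:R * k%:R + l) * va s k t
     + (l / N%:R * k%:R + l / 2 * va s.+1 k.+1 t + l / 2 * va s k.+1 t)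
  = (- le - l / N%:R * k%:R - l / 2 - l / 2) * \sum_x fS (arc s k) x * p t x
    + l / N%:R * k%:R * 1 + l / 2 * \sum_x fS (arc s.+1 k.+1) x * p t x
    + l / 2 * \sum_x fS (arc s k.+1) x * p t x.
  by rewrite /va; field; rewrite pnatr_eq0 -lt0n.
exact: h.
Qed.

Lemma dva_full s (t : R) : 0 < t ->
  is_derive t (1:R) (va s N) (- (le + l) * va s N t + l).
Proof.
move=> t0.
have := dvh (fS (arc s N)) t0.
under eq_bigr do rewrite genb_full // rearr2.
rewrite lin4 mass_one // => h.
have -> : - (le + l) * va s N t + l
  = (- le - l) * \sum_x fS (arc s N) x * p t x + l * 1
    + 0 * \sum_x fS (arc s N) x * p t x + 0 * \sum_x fS (arc s N) x * p t x.
  rewrite /va; ring.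
exact: h.
Qed.


Hypothesis hle : 0 < le.
Hypothesis hl : 0 < l.

Lemma va_cvg j : (j < N)%N -> forall s, va s (N - j) t @[t --> +oo] --> cs le l N j.
Proof.
elim: j => [|j IH] jN s.
  rewrite subn0 /=.
  apply: (@ode_cvg R (le + l) l (va s N) (fun _ => l)).
  - exact: addr_gt0.
  - by move=> t t0; apply: dva_full.
  - exact: cvg_cst.
set k := (N - j.+1)%N.
have kk : (0 < k < N)%N by rewrite /k; lia.
have e : k.+1 = (N - j)%N by rewrite /k; lia.
have IH1 := IH (ltnW jN) s.+1.
have IH2 := IH (ltnW jN) s.
rewrite -e in IH1 IH2.
have k0 : 0 <= l / N%:R * k%:R by rewrite mulr_ge0 // divr_ge0 // ltW.
have -> : cs le l N j.+1 =
   (l / N%:R * k%:R + l / 2 * cs le l N j + l / 2 * cs le l N j) / (le + l / N%:R * k%:R + l).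
  by rewrite /= -/k; congr (_ / _); field; rewrite pnatr_eq0 -lt0n.
apply: (@ode_cvg R (le + l / N%:R * k%:R + l) _ (va s k)
          (fun t => l / N%:R * k%:R + l / 2 * va s.+1 k.+1 t + l / 2 * va s k.+1 t)).
- apply: (lt_le_trans hle); rewrite -addrA lerDl; exact: addr_ge0 k0 (ltW hl).
- by move=> t t0; apply: dva.
- apply: cvgD; first apply: cvgD.
  + exact: cvg_cst.
  + exact: cvgMl_tmp.
  + exact: cvgMl_tmp.
Qed.

End Proc.

Section Asym.
Variable R : realType.
Variables le l : R.

Definition cA := l / le.
Definition cB := (l / le) ^+ 2.
Definition cE := l * (cA + 1) / le + cA + cB.
Definition cb := l * cB + 2 * l * cE.
Definition cF := (l * cE + cb ^+ 2 / (4 * l)) / le.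

Lemma cA_ge0 (hle : 0 < le) (hl : 0 < l) : 0 <= cA. Proof. by rewrite /cA divr_ge0 // ltW. Qed.
Lemma cB_ge0 : 0 <= cB. Proof. by rewrite /cB sqr_ge0. Qed.

Lemma step_upper (hle : 0 < le) (hl : 0 < l) (a K C : R) : 0 < a -> 0 <= K ->
  C <= (cA * (K + 1) + cB) * a ->
  (l * a * K + l * C) / (le + l * a * K + l) <= (cA * K + cB) * a.
Proof.
move=> a0 K0 hC.
have D0 : 0 < le + l * a * K + l.
  have : 0 <= l * a * K by rewrite !mulr_ge0 // ltW.
  move=> ?; lra.
rewrite ler_pdivrMr //.
have h1 : l * C <= l * ((cA * (K + 1) + cB) * a) by rewrite ler_pM2l.
have id : (cA * K + cB) * a * (le + l * a * K + l) - (l * a * K + l * ((cA * (K + 1) + cB) * a))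
   = l * a * a * K * (cA * K + cB).
  rewrite /cA /cB; field; exact: lt0r_neq0.
have nn : 0 <= l * a * a * K * (cA * K + cB).
  have := cA_ge0 hle hl; have := cB_ge0 => hB hA.
  apply: mulr_ge0; first by rewrite !mulr_ge0 // ltW.
  by apply: addr_ge0 => //; exact: mulr_ge0.
nra.
Qed.


Lemma step_lower (hle : 0 < le) (hl : 0 < l) (a K C : R) : 0 < a -> 0 <= K ->
  (cA * (K + 1) + cB) * a - (cE * (K + 1) ^+ 2 + cF) * a ^+ 2 <= C ->
  (cA * K + cB) * a - (cE * K ^+ 2 + cF) * a ^+ 2 <= (l * a * K + l * C) / (le + l * a * K + l).
Proof.
move=> a0 K0 hC.
have D0 : 0 < le + l * a * K + l.
  have : 0 <= l * a * K by rewrite !mulr_ge0 // ltW.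
  move=> ?; lra.
rewrite ler_pdivlMr //.
have h1 : l * ((cA * (K + 1) + cB) * a - (cE * (K + 1) ^+ 2 + cF) * a ^+ 2) <= l * C
  by rewrite ler_pM2l.
set Q := (le * cE - l * cA) * K ^+ 2 - cb * K - l * cE + le * cF.
have id : (l * a * K + l * ((cA * (K + 1) + cB) * a - (cE * (K + 1) ^+ 2 + cF) * a ^+ 2))
   - ((cA * K + cB) * a - (cE * K ^+ 2 + cF) * a ^+ 2) * (le + l * a * K + l)
   = a ^+ 2 * Q + a ^+ 2 * (cE * K ^+ 2 + cF) * (l * a * K).
  rewrite /Q /cb /cA /cB; field; exact: lt0r_neq0.
have hA := cA_ge0 hle hl.
have hB := cB_ge0.
have hal : l <= le * cE - l * cA.
  have -> : le * cE - l * cA = l + le * (cA + cB).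
    rewrite /cE /cA; field; exact: lt0r_neq0.
  by rewrite lerDl; apply: mulr_ge0; [exact: ltW | exact: addr_ge0].
have hF : le * cF = l * cE + cb ^+ 2 / (4 * l).
  by rewrite /cF; field; rewrite !lt0r_neq0.
have Q0 : 0 <= Q.
  have -> : Q = (le * cE - l * cA - l) * K ^+ 2 + l * (K - cb / (2 * l)) ^+ 2.
    rewrite /Q hF; field; exact: lt0r_neq0.
  apply: addr_ge0; first by apply: mulr_ge0; [rewrite subr_ge0 | exact: sqr_ge0].
  by apply: mulr_ge0; [exact: ltW | exact: sqr_ge0].
have E0 : 0 <= cE.
  by rewrite /cE !addr_ge0 // divr_ge0 ?mulr_ge0 ?addr_ge0 // ltW.
have F0 : 0 <= cF.
  rewrite /cF; apply: divr_ge0; last exact: ltW.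
  apply: addr_ge0; first by apply: mulr_ge0 => //; exact: ltW.
  apply: divr_ge0; first exact: sqr_ge0.
  by apply: mulr_ge0 => //; exact: ltW.
have nn : 0 <= a ^+ 2 * Q + a ^+ 2 * (cE * K ^+ 2 + cF) * (l * a * K).
  apply: addr_ge0; first by rewrite mulr_ge0 // sqr_ge0.
  apply: mulr_ge0; first apply: mulr_ge0.
  - exact: sqr_ge0.
  - by apply: addr_ge0 => //; apply: mulr_ge0 => //; exact: sqr_ge0.
  - by apply: mulr_ge0 => //; apply: mulr_ge0 => //; exact: ltW.
nra.
Qed.


Lemma cs_bounds (hle : 0 < le) (hl : 0 < l) N j : (0 < N)%N -> (j < N)%N ->
  (cA * (N - j)%:R + cB) * N%:R^-1 - (cE * (N - j)%:R ^+ 2 + cF) * N%:R^-1 ^+ 2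
  <= cs le l N j <= (cA * (N - j)%:R + cB) * N%:R^-1.
Proof.
move=> hN; set a := N%:R^-1.
have a0 : 0 < a by rewrite /a invr_gt0 ltr0n.
have na : N%:R * a = 1 by rewrite /a mulfV // pnatr_eq0 -lt0n.
have a1 : a <= 1.
  have : 1 <= (N%:R : R) by rewrite ler1n.
  move=> h; rewrite -na; rewrite ler_peMl //; exact: ltW.
have hA := cA_ge0 hle hl. have hB := cB_ge0.
elim: j => [|j IH] jN.
  rewrite subn0 /=.
  have eu : (cA * N%:R + cB) * a = cA + cB * a by rewrite mulrDl -mulrA na mulr1.
  have ew : (cE * N%:R ^+ 2 + cF) * a ^+ 2 = cE + cF * a ^+ 2.
    by rewrite mulrDl -mulrA -exprMn na expr1n mulr1.
  rewrite eu ew.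
  have c0 : 0 < l / (le + l) by rewrite divr_gt0 // addr_gt0.
  have c1 : l / (le + l) <= cA.
    rewrite /cA ler_pdivrMr ?addr_gt0 // mulrDr divfK ?lt0r_neq0 //.
    by rewrite lerDl; apply: mulr_ge0; [exact: divr_ge0 (ltW hl) (ltW hle) | exact: ltW].
  have F0 : 0 <= cF * a ^+ 2.
    apply: mulr_ge0; last exact: sqr_ge0.
    rewrite /cF; apply: divr_ge0; last exact: ltW.
    apply: addr_ge0.
      apply: mulr_ge0; first exact: ltW.
      by rewrite /cE !addr_ge0 // divr_ge0 ?mulr_ge0 ?addr_ge0 // ltW.
    apply: divr_ge0; first exact: sqr_ge0.
    by apply: mulr_ge0 => //; exact: ltW.
  have Ebig : cA + cB <= cE.
    rewrite /cE -addrA lerDr; apply: divr_ge0; last exact: ltW.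
    by apply: mulr_ge0; [exact: ltW | exact: addr_ge0].
  have Ba : cB * a <= cB by nra.
  have Ba0 : 0 <= cB * a by rewrite mulr_ge0 // ltW.
  apply/andP; split; lra.
have jN' : (j < N)%N by exact: ltnW.
have [IHl IHu] := andP (IH jN').
have eK : (N - j)%:R = (N - j.+1)%:R + 1 :> R.
  have -> : (N - j = (N - j.+1).+1)%N by lia.
  by rewrite -natr1.
rewrite eK in IHl IHu.
have K0 : 0 <= ((N - j.+1)%:R : R) by [].
rewrite /=.
change (l / N%:R) with (l * a).
apply/andP; split.
  exact: step_lower.
exact: step_upper.
Qed.


Lemma final_lim (hle : 0 < le) (hl : 0 < l) :
  (fun n : nat => n%:R * cs le l n n.-1) @ \oo --> cA + cB.
Proof.
apply/cvgrPdist_le => e e0.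
have hA := cA_ge0 hle hl. have hB := cB_ge0.
near=> n.
have n0 : (0 < n)%N by near: n; exact: nbhs_infty_gt.
have nb : (cE + cF) / e < n%:R by near: n; exact: nbhs_infty_gtr.
have jn : (n.-1 < n)%N by rewrite ltn_predL.
have [lo up] := andP (cs_bounds hle hl n0 jn).
have e1 : (n - n.-1 = 1)%N by lia.
rewrite e1 in lo up.
move: lo up; set a := n%:R^-1; set X := cs le l n n.-1 => lo up.
have m0 : 0 < (n%:R : R) by rewrite ltr0n.
have na : n%:R * a = 1 by rewrite /a mulfV // gt_eqF.
have h1 : n%:R * X <= cA + cB.
  have := ler_wpM2l (ltW m0) up.
  by rewrite mulrCA na !mulr1n !mulr1.
have h2 : cA + cB - (cE + cF) * a <= n%:R * X.
  have h := ler_wpM2l (ltW m0) lo.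
  have <- : n%:R * ((cA * 1%:R + cB) * a - (cE * 1%:R ^+ 2 + cF) * a ^+ 2)
     = cA + cB - (cE + cF) * a.
    rewrite !mulr1n expr1n !mulr1 mulrBr mulrCA na mulr1 expr2 [n%:R * (_ * (a * a))]mulrCA [n%:R * (a * a)]mulrA na mul1r.
    by [].
  exact: h.
have h3 : (cE + cF) * a <= e.
  rewrite ltr_pdivrMr // in nb.
  have : (cE + cF) * a < n%:R * e * a by rewrite ltr_pM2r // invr_gt0.
  by rewrite mulrAC na mul1r => /ltW.
rewrite ler_norml; apply/andP; split; lra.
Unshelve. all: by end_near.
Qed.

End Asym.


Lemma exS_arc01 n (x : state n.+1) : exS (arc 0 1) x = x ord0.
Proof.
apply/existsP/idP => [[k /andP [kA xk]] | x0].
  have -> : ord0 = k.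
    apply: val_inj => /=; move: kA; rewrite in_arc /dd addn0 modn_small //.
    by case: (nat_of_ord k).
  exact: xk.
by exists ord0; rewrite in_arc /dd /= x0.
Qed.

Unset Implicit Arguments.

Theorem theorem3 (R : realType) (le l : R) (hle : 0 < le) (hl : 0 < l) :
  let rho := le / l in
  exists F : nat -> R,
    (forall (n : nat) (p : R -> state n.+1 -> R),
        is_law_of_process le l p ->
        mean_fresh1 p t @[t --> +oo] --> F n.+1)
    /\ (fun n : nat => n%:R * F n) @ \oo --> rho^-1 + rho^-2.
Proof.
move=> rho.
exists (fun n => cs le l n n.-1); split.
- move=> n p hp.
  have h := @va_cvg R le l n.+1 (ltn0Sn n) p hp hle hl n (ltnSn n) 0.
  rewrite subSnn in h.
  have -> : (fun t => mean_fresh1 p t) = va p 0 1.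
    apply: funext => t; rewrite /mean_fresh1 /va; apply: eq_bigr => x _.
    by rewrite mulrC /fS exS_arc01.
  exact: h.
- have -> : rho^-1 + rho^-2 = cA le l + cB le l.
    by rewrite /rho /cA /cB -exprVn invf_div.
  exact: final_lim.
Qed.
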